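(* Let $\Phi$ be a commutative ring with unity, $\Delta=\{\delta_1,\ldots,\delta_m\}$ a basic set of derivation operators, $A=\Phi\{x_1,\ldots,x_n\}$, and let $I$ be the differential ideal of $A$ generated by $f_1,\ldots,f_r\in A$. Let $B=\Phi\{x_1,\ldots,x_n,t\}$ with one more differential variable $t$, and identify $A$ with the corresponding differential subalgebra of $B$. Let $S_I$ be the differential subalgebra of $B$ generated by $$x_1,\ldots,x_n,\ \delta_1(t),\ldots,\delta_m(t),\ tf_1,\ldots,tf_r.$$ Then for every $f\in A$: $f\in I$ if and only if $tf\in S_I$.
   Context: $\Phi$ is regarded as a differential ring with all $\delta_l$ acting as zero. The differential polynomial ring $\Phi\{y_1,\ldots,y_k\}$ is the polynomial ring over $\Phi$ in the algebraically independent variables $\theta(y_i)$, where $\theta=\delta_1^{j_1}\cdots\delta_m^{j_m}$ ranges over the free commutative monoid generated by $\Delta$, with each $\delta_l$ the derivation determined by $\delta_l(\theta(y_i))=(\delta_l\theta)(y_i)$, $\delta_l(\Phi)=0$. A differential ideal is an ideal closed under all $\delta_l$; the differential subalgebra generated by a set is the smallest $\Phi$-subalgebra with unity containing it and closed under all $\delta_l$. *)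

(* Defs.v *)
From HB Require Import structures.
From mathcomp Require Import all_boot all_order all_algebra.
From mathcomp Require Import finmap.
From mathcomp.multinomials Require Import monalg.

Set Implicit Arguments.
Unset Strict Implicit.
Unset Printing Implicit Defensive.

Import GRing.Theory.
Local Open Scope ring_scope.

(** A derivative theta(y_i), theta = delta_0^j_0 ... delta_(m-1)^j_(m-1),
    is encoded by the pair (i, [j_0; ...; j_(m-1)]). *)
Definition DVar (k m : nat) : choiceType := ('I_k * m.-tuple nat)%type.

Definition DPoly (Phi : comNzRingType) (k m : nat) :=
  {malg Phi[cmonom (DVar k m)]}.

Definition dvar (Phi : comNzRingType) (k m : nat) (v : DVar k m) : DPoly Phi k m :=
  << ucm v >>.

Definition dindet (Phi : comNzRingType) (k m : nat) (i : 'I_k) : DPoly Phi k m :=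
  dvar Phi (i, [tuple 0%N | _ < m]).

Definition dshift (k m : nat) (l : 'I_m) (v : DVar k m) : DVar k m :=
  (v.1, [tuple (tnth v.2 j + (j == l))%N | j < m]).

(** delta_l on a monomial, by the Leibniz rule, with
    delta_l (theta(y_i)) = (delta_l theta)(y_i) *)
Definition dmonom (Phi : comNzRingType) (k m : nat) (l : 'I_m)
    (mu : cmonom (DVar k m)) : DPoly Phi k m :=
  \sum_(v <- finsupp mu)
     (mu v)%:R * << divcm mu (ucm v) >> * dvar Phi (dshift l v).

(** delta_l on differential polynomials: the Phi-linear extension
    (so delta_l(Phi) = 0) *)
Definition dder (Phi : comNzRingType) (k m : nat) (l : 'I_m)
    (p : DPoly Phi k m) : DPoly Phi k m :=
  \sum_(mu <- msupp p) p@_mu *: dmonom Phi l mu.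

Definition is_diff_ideal (Phi : comNzRingType) (k m : nat)
    (J : DPoly Phi k m -> Prop) : Prop :=
  [/\ J 0,
      (forall p q, J p -> J q -> J (p + q)),
      (forall a p, J p -> J (a * p)) &
      (forall (l : 'I_m) p, J p -> J (dder l p))].

Definition diff_ideal_gen (Phi : comNzRingType) (k m : nat)
    (G : DPoly Phi k m -> Prop) (f : DPoly Phi k m) : Prop :=
  forall J : DPoly Phi k m -> Prop,
    is_diff_ideal J -> (forall g, G g -> J g) -> J f.

Definition is_diff_subalg (Phi : comNzRingType) (k m : nat)
    (S : DPoly Phi k m -> Prop) : Prop :=
  [/\ S 1,
      (forall p q, S p -> S q -> S (p + q)),
      (forall p q, S p -> S q -> S (p * q)),
      (forall (c : Phi) p, S p -> S (c *: p)) &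
      (forall (l : 'I_m) p, S p -> S (dder l p))].

Definition diff_subalg_gen (Phi : comNzRingType) (k m : nat)
    (G : DPoly Phi k m -> Prop) (f : DPoly Phi k m) : Prop :=
  forall S : DPoly Phi k m -> Prop,
    is_diff_subalg S -> (forall g, G g -> S g) -> S f.

Definition dvar_widen (n m : nat) (v : DVar n m) : DVar n.+1 m :=
  (widen_ord (leqnSn n) v.1, v.2).

Definition dembed (Phi : comNzRingType) (n m : nat) (p : DPoly Phi n m) :
    DPoly Phi n.+1 m :=
  \sum_(mu <- msupp p)
     p@_mu *: \prod_(v <- finsupp mu) dvar Phi (dvar_widen v) ^+ (mu v).

Definition SI_gens (Phi : comNzRingType) (n m r : nat)
    (fs : 'I_r -> DPoly Phi n m) (g : DPoly Phi n.+1 m) : Prop :=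
  (exists i : 'I_n, g = dembed (dindet Phi m i)) \/
  (exists l : 'I_m, g = dder l (dindet Phi m (@ord_max n))) \/
  (exists j : 'I_r, g = dindet Phi m (@ord_max n) * dembed (fs j)).

(* Main.v *)
Require Import Defs.
From HB Require Import structures.
From mathcomp Require Import all_boot all_order all_algebra.
From mathcomp Require Import finmap.
From mathcomp.multinomials Require Import monalg.
From mathcomp Require Import zify.
Set Implicit Arguments. Unset Strict Implicit. Unset Printing Implicit Defensive.
Import GRing.Theory.
Local Open Scope ring_scope.


Definition Dg (R : comNzRingType) (V : choiceType) (E : cmonom V -> R) (X : V -> R)
  (mu : cmonom V) : R :=
  \sum_(v <- finsupp mu) (mu v)%:R * E (divcm mu (ucm v)) * X v.

Lemma DgEw (R : comNzRingType) (V : choiceType) (E : cmonom V -> R) (X : V -> R)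
  (mu : cmonom V) (d : {fset V}) : (finsupp mu `<=` d)%fset ->
  Dg E X mu = \sum_(v <- d) (mu v)%:R * E (divcm mu (ucm v)) * X v.
Proof.
move=> le; rewrite /Dg (big_fset_incl _ le) //= => x _.
by rewrite -cmE_eq0 => /eqP ->; rewrite mulr0n !mul0r.
Qed.

Lemma divcmM (V : choiceType) (mu nu : cmonom V) v : mu v != 0%N ->
  divcm (mmul mu nu) (ucm v) = mmul (divcm mu (ucm v)) nu.
Proof.
move=> h; apply/eqP/cmP => i; rewrite divcmE !cmM divcmE cmU.
case: eqP => [<-|_]; last by rewrite !subn0.
move: h; lia.
Qed.

Lemma DgM (R : comNzRingType) (V : choiceType) (E : cmonom V -> R) (X : V -> R)
  (HE : forall a b, E (mmul a b) = E a * E b) (mu nu : cmonom V) :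
  Dg E X (mmul mu nu) = Dg E X mu * E nu + E mu * Dg E X nu.
Proof.
set d := (finsupp mu `|` finsupp nu)%fset.
have h0 : (finsupp (mmul mu nu) `<=` d)%fset by rewrite mdomD.
have h1 : (finsupp mu `<=` d)%fset by apply: fsubsetUl.
have h2 : (finsupp nu `<=` d)%fset by apply: fsubsetUr.
rewrite (DgEw E X h0) (DgEw E X h1) (DgEw E X h2).
rewrite mulr_suml mulr_sumr -big_split /=; apply: eq_bigr => v _.
rewrite cmM natrD !mulrDl.
have e1 : (mu v)%:R * E (divcm (mmul mu nu) (ucm v))
   = (mu v)%:R * E (divcm mu (ucm v)) * E nu.
  have [->|h] := eqVneq (mu v) 0%N; first by rewrite mulr0n !mul0r.
  by rewrite divcmM // HE mulrA.
have e2 : (nu v)%:R * E (divcm (mmul mu nu) (ucm v))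
   = E mu * ((nu v)%:R * E (divcm nu (ucm v))).
  have [->|h] := eqVneq (nu v) 0%N; first by rewrite mulr0n !mul0r mulr0.
  have -> : mmul mu nu = mmul nu mu by apply: mulmC.
  by rewrite divcmM // HE mulrA mulrC.
by rewrite e1 e2 [X in X + _ = _]mulrAC -[X in _ + X = _]mulrA.
Qed.


Lemma dderEw (Phi : comNzRingType) (k m : nat) (l : 'I_m) (p : DPoly Phi k m)
  (d : {fset cmonom (DVar k m)}) : (msupp p `<=` d)%fset ->
  dder l p = \sum_(mu <- d) p@_mu *: dmonom Phi l mu.
Proof.
move=> le; rewrite /dder (big_fset_incl _ le) //= => x _ /mcoeff_outdom ->.
by rewrite scale0r.
Qed.

Lemma dderD (Phi : comNzRingType) (k m : nat) (l : 'I_m) (p q : DPoly Phi k m) :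
  dder l (p + q) = dder l p + dder l q.
Proof.
have hp : (msupp p `<=` msupp p `|` msupp q)%fset by apply: fsubsetUl.
have hq : (msupp q `<=` msupp p `|` msupp q)%fset by apply: fsubsetUr.
rewrite (dderEw l hp) (dderEw l hq) (dderEw l (msuppD_le p q)) -big_split /=.
by apply: eq_bigr => mu _; rewrite mcoeffD scalerDl.
Qed.

Lemma dderZ (Phi : comNzRingType) (k m : nat) (l : 'I_m) c (p : DPoly Phi k m) :
  dder l (c *: p) = c *: dder l p.
Proof.
rewrite (dderEw l (msuppZ_le c p)) (dderEw l (fsubset_refl _)) scaler_sumr.
by apply: eq_bigr => mu _; rewrite mcoeffZ scalerA.
Qed.

Lemma dder0 (Phi : comNzRingType) (k m : nat) (l : 'I_m) :
  dder l (0 : DPoly Phi k m) = 0.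
Proof. by have := dderZ l 0 (0 : DPoly Phi k m); rewrite !scale0r. Qed.

Lemma dderN (Phi : comNzRingType) (k m : nat) (l : 'I_m) (p : DPoly Phi k m) :
  dder l (- p) = - dder l p.
Proof. by rewrite -scaleN1r dderZ scaleN1r. Qed.

Lemma dder_sum (Phi : comNzRingType) (k m : nat) (l : 'I_m) (I : Type) (s : seq I)
   (F : I -> DPoly Phi k m) :
  dder l (\sum_(i <- s) F i) = \sum_(i <- s) dder l (F i).
Proof. exact: (big_morph _ (dderD l) (dder0 Phi k l)). Qed.

Lemma UZ (Phi : comNzRingType) (V : choiceType) c (mu : cmonom V) :
  << c *g mu >> = c *: (<<mu>> : {malg Phi[cmonom V]}).
Proof.
apply/malgP => k; rewrite [RHS]mcoeffZ [LHS]mcoeffU [in RHS]mcoeffU.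
by rewrite mulr_natr.
Qed.

Lemma monalgE' (Phi : comNzRingType) (V : choiceType) (p : {malg Phi[cmonom V]}) :
  p = \sum_(k <- msupp p) p@_k *: <<k>>.
Proof. by rewrite {1}(monalgE p); apply: eq_bigr => k _; rewrite UZ. Qed.

Lemma dderU (Phi : comNzRingType) (k m : nat) (l : 'I_m) c (mu : cmonom (DVar k m)) :
  dder l (<< c *g mu >> : DPoly Phi k m) = c *: dmonom Phi l mu.
Proof. by rewrite (dderEw l msuppU_le) big_seq_fset1 mcoeffUU. Qed.

Lemma UM (Phi : comNzRingType) (V : choiceType) (k1 k2 : cmonom V) :
  (<<k1>> : {malg Phi[cmonom V]}) * <<k2>> = << mmul k1 k2 >>.
Proof. by rewrite malgM_def fgmulUU mulr1. Qed.

Lemma LeibAbs (Phi : comNzRingType) (K : Type) (A : comAlgType Phi) (F : A -> A)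
  (e D : K -> A)
  (FD : forall x y, F (x + y) = F x + F y) (F0 : F 0 = 0)
  (FZ : forall c x, F (c *: x) = c *: F x)
  (FM : forall i j, F (e i * e j) = D i * e j + e i * D j)
  (s t : seq K) (a b : K -> Phi) (p q : A)
  (hp : p = \sum_(i <- s) a i *: e i) (hq : q = \sum_(j <- t) b j *: e j) :
  F (p * q) = (\sum_(i <- s) a i *: D i) * q + p * (\sum_(j <- t) b j *: D j).
Proof.
have Fs : forall (I : Type) (r : seq I) (G : I -> A),
    F (\sum_(i <- r) G i) = \sum_(i <- r) F (G i).
  by move=> I r G; apply: (big_morph _ FD F0).
have ZZ : forall (a' b' : Phi) (x y : A), (a' *: x) * (b' *: y) = (a' * b') *: (x * y).
  by move=> a' b' x y; rewrite -scalerAl -scalerAr scalerA.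
rewrite hp hq !big_distrl /= Fs -big_split /=; apply: eq_bigr => i _.
rewrite !big_distrr /= Fs -big_split /=; apply: eq_bigr => j _.
by rewrite !ZZ FZ FM scalerDr.
Qed.

Lemma dderM (Phi : comNzRingType) (k m : nat) (l : 'I_m) (p q : DPoly Phi k m) :
  dder l (p * q) = dder l p * q + p * dder l q.
Proof.
apply: (LeibAbs (F := dder l) (e := fun mu => <<mu>>) (D := dmonom Phi l)
   (dderD l) (dder0 _ _ l) (dderZ l) _ (monalgE' p) (monalgE' q)).
move=> i j; rewrite UM -(scale1r (<< mmul i j>>)) -UZ dderU scale1r.
have h := (DgM (E := fun mu => (<<mu>> : DPoly Phi k m)) (fun v => dvar Phi (dshift l v)) (fun a b => esym (@UM Phi _ a b)) i j).
exact: h.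
Qed.


Lemma divcmUU (V : choiceType) (w : V) : divcm (ucm w) (ucm w) = @onecm V.
Proof. by apply/eqP/cmP => i; rewrite divcmE subnn onecmE. Qed.

Lemma one_mul3 (R : pzRingType) (x : R) : 1%:R * 1 * x = x.
Proof. by rewrite mulr1n !mul1r. Qed.

Lemma dder_dvar (Phi : comNzRingType) (k m : nat) (l : 'I_m) (w : DVar k m) :
  dder l (dvar Phi w) = dvar Phi (dshift l w).
Proof.
rewrite /dvar.
Timeout 10 rewrite dderU scale1r /dmonom.
Timeout 10 rewrite mdomU big_seq_fset1.
Timeout 10 rewrite cmUU divcmUU.
Timeout 10 exact: one_mul3.
Qed.

Lemma dmonom1 (Phi : comNzRingType) (k m : nat) (l : 'I_m) :
  dmonom Phi l (@onecm (DVar k m)) = 0.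
Proof.
Timeout 10 rewrite /dmonom. have -> : finsupp (@onecm (DVar k m)) = fset0.
  exact: mdom1.
by rewrite big_seq_fset0.
Qed.

Lemma dderC (Phi : comNzRingType) (k m : nat) (l : 'I_m) (c : Phi) :
  dder l (c%:MP : DPoly Phi k m) = 0.
Proof. Timeout 10 by rewrite dderU dmonom1 scaler0. Qed.

Lemma dder1 (Phi : comNzRingType) (k m : nat) (l : 'I_m) :
  dder l (1 : DPoly Phi k m) = 0.
Proof. have h := @dderC Phi k m l 1. by rewrite mpolyC1E in h. Qed.


Definition Mon (V : choiceType) (S : comNzRingType) (g : V -> S) (mu : cmonom V) : S :=
  \prod_(v <- finsupp mu) g v ^+ mu v.

Lemma MonEw (V : choiceType) (S : comNzRingType) (g : V -> S) (mu : cmonom V)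
  (d : {fset V}) : (finsupp mu `<=` d)%fset ->
  Mon g mu = \prod_(v <- d) g v ^+ mu v.
Proof.
move=> le; rewrite /Mon (big_fset_incl _ le) //= => x _.
by rewrite -cmE_eq0 => /eqP ->; rewrite expr0.
Qed.

Lemma Mon1 (V : choiceType) (S : comNzRingType) (g : V -> S) :
  Mon g (@onecm V) = 1.
Proof. by rewrite /Mon mdom1 big_seq_fset0. Qed.

Lemma MonM (V : choiceType) (S : comNzRingType) (g : V -> S) (a b : cmonom V) :
  Mon g (mmul a b) = Mon g a * Mon g b.
Proof.
set d := (finsupp a `|` finsupp b)%fset.
have h0 : (finsupp (mmul a b) `<=` d)%fset by rewrite mdomD.
have h1 : (finsupp a `<=` d)%fset by apply: fsubsetUl.
have h2 : (finsupp b `<=` d)%fset by apply: fsubsetUr.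
rewrite (MonEw g h0) (MonEw g h1) (MonEw g h2) -big_split /=.
by apply: eq_bigr => v _; rewrite cmM exprD.
Qed.

Lemma MonU (V : choiceType) (S : comNzRingType) (g : V -> S) (v : V) :
  Mon g (ucm v) = g v.
Proof. by rewrite /Mon mdomU big_seq_fset1 cmUU expr1. Qed.

Lemma Mon_is_mmorphism (V : choiceType) (S : comNzRingType) (g : V -> S) :
  mmorphism (Mon g).
Proof. by split; [move=> a b; apply: MonM | apply: Mon1]. Qed.

HB.instance Definition _ (V : choiceType) (S : comNzRingType) (g : V -> S) :=
  isMultiplicative.Build (cmonom V) S (Mon g) (Mon_is_mmorphism g).

Definition gw (Phi : comNzRingType) (n m : nat) (v : DVar n m) : DPoly Phi n.+1 m :=
  dvar Phi (dvar_widen v).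

Lemma dembedE (Phi : comNzRingType) (n m : nat) (p : DPoly Phi n m) :
  dembed p = mmap (@malgC _ Phi) (Mon (@gw Phi n m)) p.
Proof.
rewrite /dembed mmapE; apply: eq_bigr => mu _.
by rewrite mul_malgC.
Qed.

Lemma dembedD (Phi : comNzRingType) (n m : nat) (p q : DPoly Phi n m) :
  dembed (p + q) = dembed p + dembed q.
Proof. by rewrite !dembedE mmapD. Qed.

Lemma dembedZ (Phi : comNzRingType) (n m : nat) c (p : DPoly Phi n m) :
  dembed (c *: p) = c *: dembed p.
Proof. by rewrite !dembedE mmapZ mul_malgC. Qed.

Lemma dembedM (Phi : comNzRingType) (n m : nat) (p q : DPoly Phi n m) :
  dembed (p * q) = dembed p * dembed q.
Proof. by rewrite !dembedE rmorphM. Qed.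

Lemma dembed1 (Phi : comNzRingType) (n m : nat) :
  dembed (1 : DPoly Phi n m) = 1.
Proof. by rewrite !dembedE rmorph1. Qed.

Lemma dembed0 (Phi : comNzRingType) (n m : nat) :
  dembed (0 : DPoly Phi n m) = 0.
Proof. by rewrite !dembedE raddf0. Qed.

Lemma dembed_dvar (Phi : comNzRingType) (n m : nat) (v : DVar n m) :
  dembed (dvar Phi v) = dvar Phi (dvar_widen v).
Proof. rewrite dembedE /dvar mmapU MonU /gw /dvar. exact: mul1r. Qed.


Lemma cm_split (V : choiceType) (mu : cmonom V) v : v \in finsupp mu ->
  mu = mmul (ucm v) (divcm mu (ucm v)).
Proof.
rewrite -cmE_neq0 => h; apply/eqP/cmP => i; rewrite cmM divcmE cmU.
by case: eqP => [<-|_]; [move: h; lia | rewrite subn0].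
Qed.

Lemma mon_ind (V : choiceType) (Q : cmonom V -> Prop) :
  Q (@onecm V) -> (forall v mu, Q mu -> Q (mmul (ucm v) mu)) -> forall mu, Q mu.
Proof.
move=> Q1 QS mu; have [N] := ubnP (mdeg mu); elim: N mu => [|N IH] mu hmu.
  by move: hmu; rewrite ltn0.
have [e|ne] := eqVneq (finsupp mu) fset0.
  have -> : mu = @onecm _ by apply/eqP; rewrite -mdeg_eq0 mdegE e big_seq_fset0.
  exact: Q1.
have [v hv] := fset0Pn _ ne.
rewrite (cm_split hv); apply: QS; apply: IH.
by move: hmu; rewrite {1}(cm_split hv) mdegM mdegU; lia.
Qed.

Lemma dpoly_ind (Phi : comNzRingType) (k m : nat) (P : DPoly Phi k m -> Prop) :
  P 1 -> (forall v, P (dvar Phi v)) ->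
  (forall p q, P p -> P q -> P (p + q)) ->
  (forall p q, P p -> P q -> P (p * q)) ->
  (forall c p, P p -> P (c *: p)) -> forall p, P p.
Proof.
move=> H1 Hv HD HM HZ.
have H0 : P 0 by have := HZ 0 1 H1; rewrite scale0r.
have Hmu : forall mu, P <<mu>>.
  apply: mon_ind; first exact: H1.
  by move=> v mu h; rewrite -UM; apply: HM; [exact: Hv | exact: h].
move=> p; rewrite (monalgE' p); apply: (big_ind P H0 HD).
by move=> mu _; apply: HZ; apply: Hmu.
Qed.


Lemma widen_dshift (n m : nat) (l : 'I_m) (v : DVar n m) :
  dvar_widen (dshift l v) = dshift l (dvar_widen v).
Proof. by []. Qed.

Lemma comm_add (A B : zmodType) (e : A -> B) (dA : A -> A) (dB : B -> B)
  (eD : forall x y, e (x + y) = e x + e y)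
  (dAD : forall x y, dA (x + y) = dA x + dA y)
  (dBD : forall x y, dB (x + y) = dB x + dB y) p q
  (hp : e (dA p) = dB (e p)) (hq : e (dA q) = dB (e q)) :
  e (dA (p + q)) = dB (e (p + q)).
Proof. by rewrite dAD eD hp hq eD dBD. Qed.

Lemma comm_mul (A B : pzRingType) (e : A -> B) (dA : A -> A) (dB : B -> B)
  (eD : forall x y, e (x + y) = e x + e y)
  (eM : forall x y, e (x * y) = e x * e y)
  (dAM : forall x y, dA (x * y) = dA x * y + x * dA y)
  (dBM : forall x y, dB (x * y) = dB x * y + x * dB y) p q
  (hp : e (dA p) = dB (e p)) (hq : e (dA q) = dB (e q)) :
  e (dA (p * q)) = dB (e (p * q)).
Proof. by rewrite dAM eD !eM hp hq dBM. Qed.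

Lemma comm_scale (R : pzRingType) (A B : lmodType R) (e : A -> B) (dA : A -> A) (dB : B -> B)
  (eZ : forall c x, e (c *: x) = c *: e x)
  (dAZ : forall c x, dA (c *: x) = c *: dA x)
  (dBZ : forall c x, dB (c *: x) = c *: dB x) c p
  (hp : e (dA p) = dB (e p)) :
  e (dA (c *: p)) = dB (e (c *: p)).
Proof. by rewrite dAZ eZ hp eZ dBZ. Qed.

Lemma dembed_dder (Phi : comNzRingType) (n m : nat) (l : 'I_m) (p : DPoly Phi n m) :
  dembed (dder l p) = dder l (dembed p).
Proof.
move: p; refine (@dpoly_ind Phi n m (fun p => dembed (dder l p) = dder l (dembed p)) _ _ _ _ _).
- by rewrite dder1 dembed0 dembed1 dder1.
- by move=> v; rewrite [in LHS]dder_dvar [in LHS]dembed_dvar [in RHS]dembed_dvar [in RHS]dder_dvar widen_dshift.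
- move=> p q hp hq.
  exact: (comm_add (@dembedD Phi n m) (@dderD Phi n m l) (@dderD Phi n.+1 m l) hp hq).
- move=> p q hp hq.
  exact: (comm_mul (@dembedD Phi n m) (@dembedM Phi n m) (@dderM Phi n m l) (@dderM Phi n.+1 m l) hp hq).
- move=> c p hp.
  exact: (comm_scale (@dembedZ Phi n m) (@dderZ Phi n m l) (@dderZ Phi n.+1 m l) c hp).
Qed.

Lemma sum_shift (m : nat) (l : 'I_m) (js : m.-tuple nat) :
  (\sum_(j < m) (tnth js j + (j == l)))%N = (\sum_(j < m) tnth js j).+1.
Proof.
have e : (\sum_(i < m) (i == l : nat))%N = 1%N.
  by rewrite (bigD1 l) //= eqxx big1 // => i /negbTE ->.
by rewrite big_split /= e addn1.
Qed.

Lemma dvar_reach (Phi : comNzRingType) (n m : nat) (S : DPoly Phi n.+1 m -> Prop)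
  (hS : is_diff_subalg S) (i : 'I_n)
  (h0 : S (dvar Phi (widen_ord (leqnSn n) i, [tuple 0%N | _ < m]))) :
  forall js, S (dvar Phi (widen_ord (leqnSn n) i, js)).
Proof.
have Sd : forall (l : 'I_m) p, S p -> S (dder l p) by case: hS.
clear hS.
move=> js; have [N] := ubnP (\sum_(j < m) tnth js j); elim: N js => [|N IH] js hN.
  move: hN; rewrite ltn0 => hF; exact: (False_ind _ (Bool.diff_false_true hF)).
case: (boolP [exists j, (0 < tnth js j)%N]) => [/existsP [l hl] | hz].
  pose js' := [tuple (tnth js j - (j == l))%N | j < m].
  have ejs : js = [tuple (tnth js' j + (j == l))%N | j < m].
    apply: eq_from_tnth => j; rewrite !tnth_mktuple.
    by case: eqP => [->|_]; [move: hl; lia | rewrite subn0 addn0].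
  have -> : (widen_ord (leqnSn n) i, js) = dshift l (widen_ord (leqnSn n) i, js').
    by rewrite {1}ejs.
  rewrite -dder_dvar; apply: Sd; apply: IH.
  by move: hN; rewrite {1}ejs; under eq_bigr do rewrite tnth_mktuple; rewrite sum_shift.
have -> : js = [tuple 0%N | _ < m].
  apply: eq_from_tnth => j; rewrite tnth_mktuple.
  by apply/eqP; move: hz; rewrite negb_exists => /forallP /(_ j); rewrite lt0n negbK.
exact: h0.
Qed.

Lemma emb_in (Phi : comNzRingType) (n m : nat) (S : DPoly Phi n.+1 m -> Prop)
  (hS : is_diff_subalg S) (hx : forall i, S (dembed (dindet Phi m i))) :
  forall a : DPoly Phi n m, S (dembed a).
Proof.
have hS' := hS; case: hS' => S1 SD SM SZ Sd.
refine (@dpoly_ind Phi n m (fun a => S (dembed a)) _ _ _ _ _).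
- by rewrite dembed1.
- move=> [i js]; rewrite dembed_dvar; apply: (dvar_reach hS).
  by have := hx i; rewrite /dindet dembed_dvar.
- by move=> p q hp hq; rewrite dembedD; apply: SD.
- by move=> p q hp hq; rewrite dembedM; apply: SM.
- by move=> c p hp; rewrite dembedZ; apply: SZ.
Qed.


Definition hvar (Phi : comNzRingType) (n m : nat) (w : DVar n.+1 m) : {poly DPoly Phi n m} :=
  match unlift ord_max w.1 with
  | Some i => (dvar Phi (i, w.2))%:P
  | None => if w.2 == [tuple 0%N | _ < m] then 'X else 0
  end.

Definition cPhi (Phi : comNzRingType) (n m : nat) : Phi -> {poly DPoly Phi n m} :=
  (polyC \o (@malgC (cmonom (DVar n m)) Phi)).


Definition psi (Phi : comNzRingType) (n m : nat) (p : DPoly Phi n.+1 m) : {poly DPoly Phi n m} :=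
  mmap (@cPhi Phi n m) (Mon (@hvar Phi n m)) p.

Lemma psiD (Phi : comNzRingType) (n m : nat) (p q : DPoly Phi n.+1 m) :
  psi (p + q) = psi p + psi q.
Proof. by rewrite /psi mmapD. Qed.

Lemma psiM (Phi : comNzRingType) (n m : nat) (p q : DPoly Phi n.+1 m) :
  psi (p * q) = psi p * psi q.
Proof. by rewrite /psi rmorphM. Qed.

Lemma psi1 (Phi : comNzRingType) (n m : nat) :
  psi (1 : DPoly Phi n.+1 m) = 1.
Proof. by rewrite /psi rmorph1. Qed.

Lemma psi0 (Phi : comNzRingType) (n m : nat) :
  psi (0 : DPoly Phi n.+1 m) = 0.
Proof. by rewrite /psi raddf0. Qed.

Lemma psiZ (Phi : comNzRingType) (n m : nat) c (p : DPoly Phi n.+1 m) :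
  psi (c *: p) = (c%:MP)%:P * psi p.
Proof. by rewrite /psi mmapZ. Qed.

Lemma psi_dvar (Phi : comNzRingType) (n m : nat) (w : DVar n.+1 m) :
  psi (dvar Phi w) = hvar Phi w.
Proof. rewrite /psi /dvar mmapU MonU. Timeout 20 exact: mul1r. Qed.

Lemma unlift_widen (n : nat) (i : 'I_n) :
  unlift ord_max (widen_ord (leqnSn n) i) = Some i.
Proof.
have -> : widen_ord (leqnSn n) i = lift ord_max i by apply: val_inj; exact: (esym (lift_max i)).
exact: liftK.
Qed.

Lemma comp_add (A B C : zmodType) (f : A -> B) (g : B -> C) (h : A -> C)
  (fD : forall x y, f (x + y) = f x + f y) (gD : forall x y, g (x + y) = g x + g y)
  (hD : forall x y, h (x + y) = h x + h y) p q
  (hp : g (f p) = h p) (hq : g (f q) = h q) : g (f (p + q)) = h (p + q).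
Proof. by rewrite fD gD hp hq hD. Qed.

Lemma comp_mul (A B C : pzRingType) (f : A -> B) (g : B -> C) (h : A -> C)
  (fM : forall x y, f (x * y) = f x * f y) (gM : forall x y, g (x * y) = g x * g y)
  (hM : forall x y, h (x * y) = h x * h y) p q
  (hp : g (f p) = h p) (hq : g (f q) = h q) : g (f (p * q)) = h (p * q).
Proof. by rewrite fM gM hp hq hM. Qed.

Lemma psi_emb (Phi : comNzRingType) (n m : nat) (a : DPoly Phi n m) :
  psi (dembed a) = a%:P.
Proof.
move: a; refine (@dpoly_ind Phi n m (fun a => psi (dembed a) = a%:P) _ _ _ _ _).
- by rewrite dembed1 psi1 polyC1.
- move=> [i js]; rewrite dembed_dvar psi_dvar /hvar /=.
  by rewrite unlift_widen.
- move=> p q hp hq.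
  exact: (comp_add (@dembedD Phi n m) (@psiD Phi n m) (@polyCD _) hp hq).
- move=> p q hp hq.
  exact: (comp_mul (@dembedM Phi n m) (@psiM Phi n m) (@polyCM _) hp hq).
- move=> c p hp; rewrite dembedZ psiZ hp -polyCM.
  by rewrite mul_malgC.
Qed.

Lemma psi_t (Phi : comNzRingType) (n m : nat) :
  psi (dindet Phi m (@ord_max n)) = 'X.
Proof. by rewrite /dindet psi_dvar /hvar /= unlift_none eqxx. Qed.


Lemma dder_nat (Phi : comNzRingType) (k m : nat) (l : 'I_m) (j : nat) :
  dder l (j%:R : DPoly Phi k m) = 0.
Proof. by rewrite -mpolyC_nat dderC. Qed.

Lemma dshift_nz (k m : nat) (l : 'I_m) (w : DVar k m) :
  ((dshift l w).2 == [tuple 0%N | _ < m]) = false.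
Proof.
apply/eqP => /(congr1 (fun t => tnth t l)); rewrite !tnth_mktuple eqxx addn1.
by [].
Qed.

Lemma coef_leib (A : comNzRingType) (d : A -> A)
  (dD : forall x y, d (x + y) = d x + d y) (d0 : d 0 = 0)
  (dM : forall x y, d (x * y) = d x * y + x * d y)
  (P Q P' Q' : {poly A}) i
  (hP : forall j, (j <= i)%N -> P'`_j = d (P`_j))
  (hQ : forall j, (j <= i)%N -> Q'`_j = d (Q`_j)) :
  (P' * Q + P * Q')`_i = d ((P * Q)`_i).
Proof.
rewrite coefD !coefM (big_morph _ dD d0) -big_split /=.
apply: eq_bigr => j _; rewrite dM hP ?hQ //; last by rewrite -ltnS.
by rewrite leq_subr.
Qed.

Lemma coef_scal (Phi : comNzRingType) (A : comAlgType Phi) (d : A -> A)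
  (dZ : forall c x, d (c *: x) = c *: d x)
  (c : Phi) (kc : A) (hk : forall x, kc * x = c *: x) (P P' : {poly A}) i
  (hP : P'`_i = d (P`_i)) :
  (kc%:P * P')`_i = d ((kc%:P * P)`_i).
Proof. by rewrite !coefCM hP !hk dZ. Qed.

Lemma add_ext (A B : zmodType) (F G : A -> B)
  (FD : forall x y, F (x + y) = F x + F y) (GD : forall x y, G (x + y) = G x + G y)
  p q (hp : F p = G p) (hq : F q = G q) : F (p + q) = G (p + q).
Proof. by rewrite FD GD hp hq. Qed.

Lemma psiddD (Phi : comNzRingType) (n m : nat) (l : 'I_m) i (x y : DPoly Phi n.+1 m) :
  (psi (dder l (x + y)))`_i = (psi (dder l x))`_i + (psi (dder l y))`_i.
Proof. by rewrite [in LHS]dderD [in LHS]psiD coefD. Qed.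

Lemma psidD (Phi : comNzRingType) (n m : nat) (l : 'I_m) i (x y : DPoly Phi n.+1 m) :
  dder l ((psi (x + y))`_i) = dder l ((psi x)`_i) + dder l ((psi y)`_i).
Proof. by rewrite [in LHS]psiD coefD dderD. Qed.

Lemma psiddM (Phi : comNzRingType) (n m : nat) (l : 'I_m) (x y : DPoly Phi n.+1 m) :
  psi (dder l (x * y)) = psi (dder l x) * psi y + psi x * psi (dder l y).
Proof. by rewrite [in LHS]dderM psiD [X in X + _]psiM [X in _ + X]psiM. Qed.

Lemma psi_dder (Phi : comNzRingType) (n m : nat) (l : 'I_m) (p : DPoly Phi n.+1 m) :
  forall i, (i <= 1)%N -> (psi (dder l p))`_i = dder l ((psi p)`_i).
Proof.
move: p; refine (@dpoly_ind Phi n.+1 m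
  (fun p => forall i, (i <= 1)%N -> (psi (dder l p))`_i = dder l ((psi p)`_i)) _ _ _ _ _).
- move=> i _; rewrite dder1 psi0 coef0 psi1 coef1.
  by rewrite dder_nat.
- move=> w i _; rewrite dder_dvar [in LHS]psi_dvar [in RHS]psi_dvar /hvar /=.
  case: (unlift ord_max w.1) => [i'|].
    rewrite [in LHS]coefC [in RHS]coefC; case: (i == 0%N).
      by rewrite dder_dvar.
    by rewrite dder0.
  rewrite dshift_nz coef0; case: ifP => _.
    by rewrite coefX dder_nat.
  by rewrite coef0 dder0.
- move=> p q hp hq i hi.
  apply: (add_ext (F := fun p => (psi (dder l p))`_i) (G := fun p => dder l ((psi p)`_i))).
  + by move=> x y; apply: psiddD.
  + by move=> x y; apply: psidD.
  + exact: (hp i hi).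
  + exact: (hq i hi).
- move=> p q hp hq i hi.
  rewrite [in LHS]psiddM [in RHS]psiM.
  apply: (coef_leib (@dderD Phi n m l) (dder0 Phi n l) (@dderM Phi n m l)).
    by move=> j hj; apply: hp; apply: leq_trans hi.
  by move=> j hj; apply: hq; apply: leq_trans hi.
- move=> c p hp i hi.
  rewrite [in LHS]dderZ [in LHS]psiZ [in RHS]psiZ.
  apply: (coef_scal (@dderZ Phi n m l)); last exact: hp.
  by move=> x; rewrite mul_malgC.
Qed.


Lemma grp_id (R : zmodType) (u v : R) : v = u + v + - u.
Proof. by rewrite [u + v]addrC addrK. Qed.

Lemma forward (Phi : comNzRingType) (m n r : nat)
    (fs : 'I_r -> DPoly Phi n m) (f : DPoly Phi n m) :
  diff_ideal_gen (fun g => exists j : 'I_r, g = fs j) f ->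
  diff_subalg_gen (SI_gens fs) (dindet Phi m (@ord_max n) * dembed f).
Proof.
move=> hI S hS hG.
have hS' := hS; case: hS' => S1 SD SM SZ Sd.
set t := dindet Phi m (@ord_max n).
have hemb : forall a, S (dembed a).
  apply: (emb_in hS) => i; apply: hG; left; exists i; reflexivity.
have S0 : S 0 by have := SZ 0 1 S1; rewrite scale0r.
apply: (hI (fun g => S (t * dembed g))).
  split.
  - by rewrite dembed0 mulr0.
  - move=> p q hp hq; rewrite dembedD mulrDr; exact: SD.
  - move=> a p hp; rewrite dembedM mulrCA; exact: SM.
  - move=> l p hp.
    have e : t * dembed (dder l p) = dder l (t * dembed p) + (-1) *: (dder l t * dembed p).
      rewrite scaleN1r [in RHS]dderM dembed_dder.
      exact: grp_id.
    rewrite e; apply: SD; first exact: Sd.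
    apply: SZ; apply: SM; last exact: hemb.
    apply: hG; right; left; exists l; reflexivity.
move=> g [j ->]; apply: hG; right; right; exists j; reflexivity.
Qed.

Lemma backward (Phi : comNzRingType) (m n r : nat)
    (fs : 'I_r -> DPoly Phi n m) (f : DPoly Phi n m) :
  diff_subalg_gen (SI_gens fs) (dindet Phi m (@ord_max n) * dembed f) ->
  diff_ideal_gen (fun g => exists j : 'I_r, g = fs j) f.
Proof.
move=> hS J hJ hGJ.
have hJ' := hJ; case: hJ' => J0 JD JM Jd.
have := hS (fun p => J ((psi p)`_1)).
rewrite psiM psi_t psi_emb coefXM /= coefC /=.
apply.
  split.
  - by rewrite psi1 coef1 /=.
  - move=> p q hp hq; rewrite psiD coefD; exact: (JD _ _ hp hq).
  - move=> p q hp hq; rewrite psiM coefM !big_ord_recr big_ord0 /= add0r.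
    apply: JD; first exact: (JM _ _ hq).
    rewrite mulrC; exact: (JM _ _ hp).
  - move=> c p hp; rewrite psiZ coefCM; exact: (JM _ _ hp).
  - move=> l p hp; rewrite (psi_dder l p (i := 1)); [exact: (Jd _ _ hp) | by []].
move=> g [[i ->]|[[l ->]|[j ->]]].
- by rewrite psi_emb coefC /=.
- rewrite (psi_dder l _ (i := 1)) // psi_t coefX /=.
  by rewrite dder_nat.
- rewrite psiM psi_t psi_emb coefXM /= coefC /=.
  apply: hGJ; exists j; reflexivity.
Qed.

Unset Implicit Arguments.

Theorem proposition2 (Phi : comNzRingType) (m n r : nat)
    (fs : 'I_r -> DPoly Phi n m) (f : DPoly Phi n m) :
  diff_ideal_gen (fun g => exists j : 'I_r, g = fs j) f <->
  diff_subalg_gen (SI_gens fs)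
    (dindet Phi m (@ord_max n) * dembed f).
Proof.
split; [exact: forward | exact: backward].
Qed.
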